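(* Let $(a_k)_{k\ge1},(c_k)_{k\ge1}$ be real sequences with $\sum_{k\ge1}(a_k^2+c_k^2)<\infty$. Then $$\begin{aligned}F(a,c):=\sum_{k\ge1}\Big\{&a_k^2\Big(0.84+\frac1{k^2}-\frac1{(k-1)^2}\Big)+c_k^2\Big(0.84+\frac1{k(k+1)}\Big)+\frac{2a_ka_{k+1}}{(k+1)^2}+2a_k\sum_{j>k+1}a_j\Big(\frac1{j^2}-\frac1{(j-1)^2}\Big)\\&+2a_kc_k\frac{1+2k-k^2}{2k^2(k+1)}+2a_{k+1}c_k\frac{k^2-k-1}{2k^2(k+1)^2}-2a_{k+2}c_k\frac{k+2}{2(k+1)^2}+\sum_{j>k}\frac{2a_kc_j}{j(j+1)}\Big\}\ge0.\end{aligned}$$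
   Context: For $k=1$ the term $\frac{1}{(k-1)^2}$ is interpreted as $0$. *)

(* Defs.v *)
From Stdlib Require Import Reals.
From Coquelicot Require Import Coquelicot.
Open Scope R_scope.

(* 1/(k-1)^2, interpreted as 0 for k = 1 (and k = 0). *)
Definition inv_sq_pred (k : nat) : R :=
  match k with
  | O | S O => 0
  | S m => 1 / (INR m) ^ 2
  end.

(* The k-th summand of F(a,c), for k >= 1. Sequences are indexed from 1;
   the values a 0, c 0 are never used. *)
Definition F_term (a c : nat -> R) (k : nat) : R :=
  let K := INR k in
  a k ^ 2 * (84 / 100 + 1 / K ^ 2 - inv_sq_pred k)
  + c k ^ 2 * (84 / 100 + 1 / (K * (K + 1)))
  + 2 * a k * a (S k) / (K + 1) ^ 2
  + 2 * a k * Series (fun i => let j := (k + 2 + i)%nat in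
                        a j * (1 / (INR j) ^ 2 - 1 / (INR j - 1) ^ 2))
  + 2 * a k * c k * ((1 + 2 * K - K ^ 2) / (2 * K ^ 2 * (K + 1)))
  + 2 * a (S k) * c k * ((K ^ 2 - K - 1) / (2 * K ^ 2 * (K + 1) ^ 2))
  - 2 * a (S (S k)) * c k * ((K + 2) / (2 * (K + 1) ^ 2))
  + Series (fun i => let j := (k + 1 + i)%nat in
              2 * a k * c j / (INR j * (INR j + 1))).

(* Main.v *)
Require Import Defs.
From Stdlib Require Import Reals Lra Lia Psatz.
From Coquelicot Require Import Coquelicot.
Open Scope R_scope.

Definition AL (k : nat) : R := let K := INR k in (1 + 2 * K - K ^ 2) / (2 * K ^ 2 * (K + 1)).
Definition BE (k : nat) : R := let K := INR k in (K ^ 2 - K - 1) / (2 * K ^ 2 * (K + 1) ^ 2).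
Definition GA (k : nat) : R := let K := INR k in (K + 2) / (2 * (K + 1) ^ 2).
Definition bk (k : nat) : R := 1 / (INR k) ^ 2 - inv_sq_pred k.
Definition hform (k : nat) (s a0 a1 a2 c : R) : R := let K := INR k in
  a0 ^ 2 * (84 / 100 + bk k) + 2 * bk k * a0 * s + 2 * a0 * a1 / K ^ 2
  + c ^ 2 * (84 / 100 + 1 / (K * (K + 1))) + 2 * c * s / (K * (K + 1))
  + 2 * a0 * c * AL k + 2 * a1 * c * BE k - 2 * a2 * c * GA k.
Definition PP : R := 1 / 20.
Definition XX : R := -62 / 10000.
Definition YY : R := -46 / 10000.
Definition quad (t : R * R * R * R * R * R) (s a0 a1 : R) : R :=
  let '(p00, p01, p02, p11, p12, p22) := t in
  p00 * s ^ 2 + 2 * p01 * s * a0 + 2 * p02 * s * a1 + p11 * a0 ^ 2 + 2 * p12 * a0 * a1 + p22 * a1 ^ 2.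
Definition phic (k : nat) : R * R * R * R * R * R :=
  match k with
  | 2 => ((1653423/1000000), (523321/500000), (5597/40000), (-1167/100000), (-34981/1000000), (-52477/500000))
  | 3 => ((36141/1000000), (7157/31250), (3961/1000000), (-110411/1000000), (2477/500000), (-3109/62500))
  | 4 => ((4787/250000), (-14483/1000000), (16881/1000000), (-40091/500000), (3947/500000), (-27267/1000000))
  | 5 => ((9331/1000000), (4221/200000), (699/125000), (-15529/500000), (1337/500000), (-8189/500000))
  | 6 => ((3987/500000), (2779/500000), (453/125000), (-9173/500000), (1603/1000000), (-10933/1000000))
  | 7 => ((7111/1000000), (761/200000), (2149/1000000), (-11867/1000000), (987/1000000), (-7777/1000000))
  | 8 => ((6623/1000000), (559/250000), (1407/1000000), (-519/62500), (131/200000), (-5803/1000000))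
  | 9 => ((1261/200000), (1471/1000000), (193/200000), (-6123/1000000), (57/125000), (-4491/1000000))
  | 10 => ((1521/250000), (203/200000), (69/100000), (-2349/500000), (329/1000000), (-447/125000))
  | 11 => ((5919/1000000), (731/1000000), (509/1000000), (-1859/500000), (123/500000), (-1457/500000))
  | _ => (0, 0, 0, 0, 0, 0)
  end.

Definition phi (k : nat) (s a0 a1 : R) : R :=
  if (k <=? 1)%nat then 0 else if (k <=? 11)%nat then quad (phic k) s a0 a1
  else PP / INR k * s ^ 2 + XX * a0 ^ 2 + YY * a1 ^ 2.

Lemma step_1 : forall s a0 a1 a2 c, s = 0 -> 0 <= hform 1 s a0 a1 a2 c + phi 1 s a0 a1 - phi 2 (s + a0) a1 a2.
Proof.
  intros s a0 a1 a2 c Hs; subst s.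
  cbv [hform phi quad phic bk AL BE GA inv_sq_pred Nat.leb PP XX YY]; simpl INR.
  assert (H0 := pow2_ge_0 ((1)*a0 + (-46642/186577)*a1 + (-139925/186577)*a2 + (500000/186577)*c)).
  assert (H1 := pow2_ge_0 ((1)*a1 + (268187/1877426)*a2 + (-562500/938713)*c)).
  assert (H2 := pow2_ge_0 ((1)*a2 + (-37375000/29770057)*c)).
  assert (H3 := pow2_ge_0 ((1)*c)).
  lra.
Qed.

Lemma step_2 : forall s a0 a1 a2 c, 0 <= hform 2 s a0 a1 a2 c + phi 2 s a0 a1 - phi 3 (s + a0) a1 a2.
Proof.
  intros s a0 a1 a2 c.
  cbv [hform phi quad phic bk AL BE GA inv_sq_pred Nat.leb PP XX YY]; simpl INR.
  assert (H0 := pow2_ge_0 ((1)*s + (260501/1617282)*a0 + (-89099/1617282)*a1 + (-3961/1617282)*a2 + (250000/2425923)*c)).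
  assert (H1 := pow2_ge_0 ((1)*a0 + (560344189/370739297)*a1 + (-5374209541/370739297)*a2 + (71909750000/1112217891)*c)).
  assert (H2 := pow2_ge_0 ((1)*a1 + (-11105480335/1831987456)*a2 + (27939378125/1030492944)*c)).
  assert (H3 := pow2_ge_0 ((1)*a2 + (-15979504750000/3608480078961)*c)).
  assert (H4 := pow2_ge_0 ((1)*c)).
  lra.
Qed.

Lemma step_3 : forall s a0 a1 a2 c, 0 <= hform 3 s a0 a1 a2 c + phi 3 s a0 a1 - phi 4 (s + a0) a1 a2.
Proof.
  intros s a0 a1 a2 c.
  cbv [hform phi quad phic bk AL BE GA inv_sq_pred Nat.leb PP XX YY]; simpl INR.
  assert (H0 := pow2_ge_0 ((1)*s + (638884/152937)*a0 + (18444/16993)*a1 + (-16881/16993)*a2 + (250000/50979)*c)).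
  assert (H1 := pow2_ge_0 ((1)*a0 + (73638539757/378530421497)*a1 + (73829441763/378530421497)*a2 + (-517397250000/378530421497)*c)).
  assert (H2 := pow2_ge_0 ((1)*a1 + (-2361094294289/4318620724589)*a2 + (130725784156250/38867586521301)*c)).
  assert (H3 := pow2_ge_0 ((1)*a2 + (-1254351881218750/312169779156321)*c)).
  assert (H4 := pow2_ge_0 ((1)*c)).
  lra.
Qed.

Lemma step_4 : forall s a0 a1 a2 c, 0 <= hform 4 s a0 a1 a2 c + phi 4 s a0 a1 - phi 5 (s + a0) a1 a2.
Proof.
  intros s a0 a1 a2 c.
  cbv [hform phi quad phic bk AL BE GA inv_sq_pred Nat.leb PP XX YY]; simpl INR.
  assert (H0 := pow2_ge_0 ((1)*s + (-651826/88353)*a0 + (-4224/9817)*a1 + (-5592/9817)*a2 + (50000/9817)*c)).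
  assert (H1 := pow2_ge_0 ((1)*a0 + (14413661937/133238429423)*a1 + (-3386520792/12112584493)*a2 + (258532706250/133238429423)*c)).
  assert (H2 := pow2_ge_0 ((1)*a1 + (-812697893491/840934586276)*a2 + (1528006176250/210233646569)*c)).
  assert (H3 := pow2_ge_0 ((1)*a2 + (-31783704625000/4987725731627)*c)).
  assert (H4 := pow2_ge_0 ((1)*c)).
  lra.
Qed.

Lemma step_5 : forall s a0 a1 a2 c, 0 <= hform 5 s a0 a1 a2 c + phi 5 s a0 a1 - phi 6 (s + a0) a1 a2.
Proof.
  intros s a0 a1 a2 c.
  cbv [hform phi quad phic bk AL BE GA inv_sq_pred Nat.leb PP XX YY]; simpl INR.
  assert (H0 := pow2_ge_0 ((1)*s + (-9369/1357)*a0 + (34/1357)*a1 + (-3624/1357)*a2 + (100000/4071)*c)).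
  assert (H1 := pow2_ge_0 ((1)*a0 + (50684958/968602915)*a1 + (-38871024/968602915)*a2 + (149384000/581161749)*c)).
  assert (H2 := pow2_ge_0 ((1)*a1 + (-12859422169/12264573248)*a2 + (130330560625/13797644904)*c)).
  assert (H3 := pow2_ge_0 ((1)*a2 + (-15761258989000/2015353992681)*c)).
  assert (H4 := pow2_ge_0 ((1)*c)).
  lra.
Qed.

Lemma step_6 : forall s a0 a1 a2 c, 0 <= hform 6 s a0 a1 a2 c + phi 6 s a0 a1 - phi 7 (s + a0) a1 a2.
Proof.
  intros s a0 a1 a2 c.
  cbv [hform phi quad phic bk AL BE GA inv_sq_pred Nat.leb PP XX YY]; simpl INR.
  assert (H0 := pow2_ge_0 ((1)*s + (-123977/7767)*a0 + (-181/863)*a1 + (-2149/863)*a2 + (500000/18123)*c)).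
  assert (H1 := pow2_ge_0 ((1)*a0 + (1585865061/40714332800)*a1 + (-79626897/1272322900)*a2 + (818176875/1425001648)*c)).
  assert (H2 := pow2_ge_0 ((1)*a1 + (-728731790752/503629698793)*a2 + (3373277397125000/222100697167713)*c)).
  assert (H3 := pow2_ge_0 ((1)*a2 + (-126890125748125000/13159372102181613)*c)).
  assert (H4 := pow2_ge_0 ((1)*c)).
  lra.
Qed.

Lemma step_7 : forall s a0 a1 a2 c, 0 <= hform 7 s a0 a1 a2 c + phi 7 s a0 a1 - phi 8 (s + a0) a1 a2.
Proof.
  intros s a0 a1 a2 c.
  cbv [hform phi quad phic bk AL BE GA inv_sq_pred Nat.leb PP XX YY]; simpl INR.
  assert (H0 := pow2_ge_0 ((1)*s + (-2246369/107604)*a0 + (-87/488)*a1 + (-1407/488)*a2 + (15625/427)*c)).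
  assert (H1 := pow2_ge_0 ((1)*a0 + (822980308941/28541352691318)*a1 + (-1460609644851/28541352691318)*a2 + (7816114687500/14270676345659)*c)).
  assert (H2 := pow2_ge_0 ((1)*a1 + (-522596169435745/325720641337373)*a2 + (310104252192671875/15960311425531277)*c)).
  assert (H3 := pow2_ge_0 ((1)*a2 + (-12870341798879546875/1131564227266335317)*c)).
  assert (H4 := pow2_ge_0 ((1)*c)).
  lra.
Qed.

Lemma step_8 : forall s a0 a1 a2 c, 0 <= hform 8 s a0 a1 a2 c + phi 8 s a0 a1 - phi 9 (s + a0) a1 a2.
Proof.
  intros s a0 a1 a2 c.
  cbv [hform phi quad phic bk AL BE GA inv_sq_pred Nat.leb PP XX YY]; simpl INR.
  assert (H0 := pow2_ge_0 ((1)*s + (-216878/7791)*a0 + (-32/159)*a1 + (-965/318)*a2 + (62500/1431)*c)).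
  assert (H1 := pow2_ge_0 ((1)*a0 + (4973339623/219202293376)*a1 + (-10623473665/219202293376)*a2 + (2376401234375/3945641280768)*c)).
  assert (H2 := pow2_ge_0 ((1)*a1 + (-4131777519271/2531451562417)*a2 + (9012725597265625/410095153111554)*c)).
  assert (H3 := pow2_ge_0 ((1)*a2 + (-109670164169609375/8347989296313783)*c)).
  assert (H4 := pow2_ge_0 ((1)*c)).
  lra.
Qed.

Lemma step_9 : forall s a0 a1 a2 c, 0 <= hform 9 s a0 a1 a2 c + phi 9 s a0 a1 - phi 10 (s + a0) a1 a2.
Proof.
  intros s a0 a1 a2 c.
  cbv [hform phi quad phic bk AL BE GA inv_sq_pred Nat.leb PP XX YY]; simpl INR.
  assert (H0 := pow2_ge_0 ((1)*s + (-639278/17901)*a0 + (-50/221)*a1 + (-690/221)*a2 + (100000/1989)*c)).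
  assert (H1 := pow2_ge_0 ((1)*a0 + (14501384721/786852807524)*a1 + (-18364867155/393426403762)*a2 + (18566325000/28101885983)*c)).
  assert (H2 := pow2_ge_0 ((1)*a1 + (-14371829081686/8947885168407)*a2 + (18421662171920000/724778698640967)*c)).
  assert (H3 := pow2_ge_0 ((1)*a2 + (-281683550255569375/19018461068398521)*c)).
  assert (H4 := pow2_ge_0 ((1)*c)).
  lra.
Qed.

Lemma step_10 : forall s a0 a1 a2 c, 0 <= hform 10 s a0 a1 a2 c + phi 10 s a0 a1 - phi 11 (s + a0) a1 a2.
Proof.
  intros s a0 a1 a2 c.
  cbv [hform phi quad phic bk AL BE GA inv_sq_pred Nat.leb PP XX YY]; simpl INR.
  assert (H0 := pow2_ge_0 ((1)*s + (-53384/1215)*a0 + (-41/165)*a1 + (-509/165)*a2 + (20000/363)*c)).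
  assert (H1 := pow2_ge_0 ((1)*a0 + (767298906/50044511929)*a1 + (-2251062171/50044511929)*a2 + (393536475000/550489631219)*c)).
  assert (H2 := pow2_ge_0 ((1)*a1 + (-11989642369119/6755955550319)*a2 + (2198082982075000/74315511053509)*c)).
  assert (H3 := pow2_ge_0 ((1)*a2 + (-337900070596620000/20533188782283661)*c)).
  assert (H4 := pow2_ge_0 ((1)*c)).
  lra.
Qed.

Lemma step_11 : forall s a0 a1 a2 c, 0 <= hform 11 s a0 a1 a2 c + phi 11 s a0 a1 - phi 12 (s + a0) a1 a2.
Proof.
  intros s a0 a1 a2 c.
  cbv [hform phi quad phic bk AL BE GA inv_sq_pred Nat.leb PP XX YY]; simpl INR.
  assert (H0 := pow2_ge_0 ((1)*s + (-1877147/636097)*a0 + (1527/5257)*a1 + (250000/57827)*c)).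
  assert (H1 := pow2_ge_0 ((1)*a0 + (770642669885/62737893473131)*a1 + (-876678000000/62737893473131)*c)).
  assert (H2 := pow2_ge_0 ((1)*a1 + (36458174019274609375/103000278088703921904)*c)).
  assert (H3 := pow2_ge_0 ((1)*a2 + (-8125/828)*c)).
  assert (H4 := pow2_ge_0 ((1)*c)).
  lra.
Qed.

Lemma q2 : forall A B C u v, 0 <= A -> 0 <= C -> B ^ 2 <= A * C ->
  0 <= A * u ^ 2 + 2 * B * u * v + C * v ^ 2.
Proof.
  intros A B C u v HA HC HB.
  destruct (Req_dec A 0) as [H0|H0].
  - subst A. assert (B = 0) by nra. subst B. nra.
  - assert (0 < A) by lra.
    assert (H1 : 0 <= A * (A * u ^ 2 + 2 * B * u * v + C * v ^ 2)).
    { replace (A * (A * u ^ 2 + 2 * B * u * v + C * v ^ 2)) with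
        ((A * u + B * v) ^ 2 + (A * C - B ^ 2) * v ^ 2) by ring.
      assert (0 <= (A*C - B^2) * v^2) by (apply Rmult_le_pos; [lra | apply pow2_ge_0]).
      assert (H2 := pow2_ge_0 (A * u + B * v)). lra. }
    apply (Rmult_le_reg_l A); [lra | rewrite Rmult_0_r; exact H1].
Qed.

Lemma tail_poly (b w iK2 al be ga p1 s a0 a1 a2 c : R) :
  0 <= w -> 0 <= PP * w / 2 ->
  (b - p1) ^ 2 <= (PP * w / 2) * (1/4) ->
  iK2 ^ 2 <= (1/10) * (1/2000) ->
  al ^ 2 <= (1/10) * (1/50) ->
  be ^ 2 <= (1/1000) * (1/100) ->
  ga ^ 2 <= (- YY) * (38/100) ->
  0 <= 84/100 + b + XX - p1 - 1/4 - 1/10 - 1/10 ->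
  0 <= 84/100 + w - 40 * w - 1/50 - 1/100 - 38/100 ->
  0 <= a0^2*(84/100 + b) + 2*b*a0*s + 2*a0*a1*iK2 + c^2*(84/100 + w) + 2*c*s*w
       + 2*a0*c*al + 2*a1*c*be - 2*a2*c*ga
       + ((p1 + PP*w)*s^2 + XX*a0^2 + YY*a1^2) - (p1*(s+a0)^2 + XX*a1^2 + YY*a2^2).
Proof.
  intros Hw Hw2 H1 H3 H4 H5 H6 Ra0 Rc.
  assert (Q1 := q2 (PP*w/2) (b - p1) (1/4) s a0 Hw2 ltac:(lra) H1).
  assert (Q2 := q2 (PP*w/2) w (40*w) s c Hw2 ltac:(lra)
                  ltac:(unfold PP; nra)).
  assert (Q3 := q2 (1/10) iK2 (1/2000) a0 a1 ltac:(lra) ltac:(lra) H3).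
  assert (Q4 := q2 (1/10) al (1/50) a0 c ltac:(lra) ltac:(lra) H4).
  assert (Q5 := q2 (1/1000) be (1/100) a1 c ltac:(lra) ltac:(lra) H5).
  assert (Q6 := q2 (-YY) (-ga) (38/100) a2 c ltac:(unfold YY; lra) ltac:(lra)
                  ltac:(replace ((-ga)^2) with (ga^2) by ring; exact H6)).
  assert (R1 : 0 <= (84/100 + b + XX - p1 - 1/4 - 1/10 - 1/10) * a0^2)
    by (apply Rmult_le_pos; [lra | apply pow2_ge_0]).
  assert (R2 : 0 <= (YY - XX - 1/2000 - 1/1000) * a1^2)
    by (apply Rmult_le_pos; [unfold XX, YY; lra | apply pow2_ge_0]).
  assert (R3 : 0 <= (84/100 + w - 40 * w - 1/50 - 1/100 - 38/100) * c^2)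
    by (apply Rmult_le_pos; [lra | apply pow2_ge_0]).
  unfold PP, XX, YY in *. lra.
Qed.

Lemma div_le_l a b c : 0 < c -> a <= b * c -> a / c <= b.
Proof. intros Hc H. unfold Rdiv. apply (Rmult_le_reg_r c); [lra|].
  rewrite Rmult_assoc, Rinv_l by lra. lra. Qed.

Lemma sq_le_of (x N D r : R) : 0 < D -> x = N / D -> N ^ 2 <= r * D ^ 2 -> x ^ 2 <= r.
Proof.
  intros HD -> H. replace ((N / D) ^ 2) with (N ^ 2 / D ^ 2) by (field; lra).
  apply div_le_l. apply pow_lt; lra. lra.
Qed.

Ltac tpos t := repeat match goal with |- _ => fail end;
  assert (0 <= t ^ 2) by (apply pow_le; lra);
  assert (0 <= t ^ 3) by (apply pow_le; lra);
  assert (0 <= t ^ 4) by (apply pow_le; lra);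
  assert (0 <= t ^ 5) by (apply pow_le; lra);
  assert (0 <= t ^ 6) by (apply pow_le; lra);
  assert (0 <= t ^ 7) by (apply pow_le; lra);
  assert (0 <= t ^ 8) by (apply pow_le; lra);
  assert (0 <= t ^ 9) by (apply pow_le; lra);
  assert (0 <= t ^ 10) by (apply pow_le; lra).

Lemma tail_scalars (K : R) : 12 <= K ->
  let b := 1 / K ^ 2 - 1 / (K - 1) ^ 2 in
  let w := 1 / (K * (K + 1)) in
  let p1 := PP / (K + 1) in
  0 <= w /\ 0 <= PP * w / 2 /\
  (b - p1) ^ 2 <= (PP * w / 2) * (1/4) /\
  (1 / K ^ 2) ^ 2 <= (1/10) * (1/2000) /\
  ((1 + 2 * K - K ^ 2) / (2 * K ^ 2 * (K + 1))) ^ 2 <= (1/10) * (1/50) /\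
  ((K ^ 2 - K - 1) / (2 * K ^ 2 * (K + 1) ^ 2)) ^ 2 <= (1/1000) * (1/100) /\
  ((K + 2) / (2 * (K + 1) ^ 2)) ^ 2 <= (- YY) * (38/100) /\
  0 <= 84/100 + b + XX - p1 - 1/4 - 1/10 - 1/10 /\
  0 <= 84/100 + w - 40 * w - 1/50 - 1/100 - 38/100.
Proof.
  intros HK b w p1.
  set (t := K - 12).
  assert (Ht : 0 <= t) by (unfold t; lra).
  assert (EK : K = t + 12) by (unfold t; ring).
  assert (Hw0 : 0 < w) by (unfold w; apply Rdiv_lt_0_compat; nra).
  assert (Hw1 : w <= 1/156).
  { unfold w. apply div_le_l; [nra|]. rewrite EK. nra. }
  assert (Hp1 : 0 <= p1 <= 1/20).
  { unfold p1, PP. split. unfold Rdiv; apply Rmult_le_pos; [lra | left; apply Rinv_0_lt_compat; lra].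
    apply div_le_l; lra. }
  assert (Hb : -1/100 <= b).
  { unfold b. replace (1 / K ^ 2 - 1 / (K - 1) ^ 2) with (- ((2*K-1) / (K^2 * (K-1)^2)))
      by (field; lra).
    assert ((2*K-1) / (K^2 * (K-1)^2) <= 1/100); [|lra].
    apply div_le_l. apply Rmult_lt_0_compat; apply pow_lt; lra.
    rewrite EK. tpos t. nra. }
  tpos t.
  split; [lra|]. split; [unfold PP; nra|].
  split.
  { apply (sq_le_of _ (20*(K+1)*(1-2*K) - K^2*(K-1)^2) (20*K^2*(K-1)^2*(K+1))).
    - apply Rmult_lt_0_compat; [|lra]. apply Rmult_lt_0_compat; [|apply pow_lt; lra].
      apply Rmult_lt_0_compat; [lra|apply pow_lt; lra].
    - unfold b, p1, PP. field. repeat split; lra.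
    - unfold w, PP. rewrite EK.
      replace (1 / 20 * (1 / ((t + 12) * (t + 12 + 1))) / 2 * (1 / 4) *
        (20 * (t + 12) ^ 2 * (t + 12 - 1) ^ 2 * (t + 12 + 1)) ^ 2)
        with (5/2 * (t+12)^3 * (t+12-1)^4 * (t+12+1)) by (field; lra).
      nra. }
  split.
  { apply (sq_le_of _ 1 (K^2)); [apply pow_lt; lra | field; lra |].
    rewrite EK. nra. }
  split.
  { apply (sq_le_of _ (1 + 2 * K - K ^ 2) (2 * K ^ 2 * (K + 1))); [| reflexivity |].
    apply Rmult_lt_0_compat; [|lra]. apply Rmult_lt_0_compat; [lra|apply pow_lt; lra].
    rewrite EK. nra. }
  split.
  { apply (sq_le_of _ (K ^ 2 - K - 1) (2 * K ^ 2 * (K + 1) ^ 2)); [| reflexivity |].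
    apply Rmult_lt_0_compat; [|apply pow_lt; lra]. apply Rmult_lt_0_compat; [lra|apply pow_lt; lra].
    rewrite EK. nra. }
  split.
  { apply (sq_le_of _ (K + 2) (2 * (K + 1) ^ 2)); [| reflexivity |].
    apply Rmult_lt_0_compat; [lra|apply pow_lt; lra].
    unfold YY. rewrite EK. nra. }
  split.
  { unfold XX. lra. }
  lra.
Qed.

Lemma step_tail (k : nat) (s a0 a1 a2 c : R) : (12 <= k)%nat ->
  0 <= hform k s a0 a1 a2 c + phi k s a0 a1 - phi (S k) (s + a0) a1 a2.
Proof.
  intros Hk.
  destruct k as [|[|m]]; try lia.
  assert (HK : 12 <= INR (S (S m))) by (replace 12 with (INR 12) by (simpl; lra); apply le_INR; lia).
  assert (E1 : INR (S m) = INR (S (S m)) - 1) by (rewrite (S_INR (S m)); ring).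
  assert (E2 : INR (S (S (S m))) = INR (S (S m)) + 1) by (rewrite (S_INR (S (S m))); ring).
  assert (L1 : (S (S m) <=? 1)%nat = false) by (apply Nat.leb_gt; lia).
  assert (L2 : (S (S m) <=? 11)%nat = false) by (apply Nat.leb_gt; lia).
  assert (L3 : (S (S (S m)) <=? 1)%nat = false) by (apply Nat.leb_gt; lia).
  assert (L4 : (S (S (S m)) <=? 11)%nat = false) by (apply Nat.leb_gt; lia).
  unfold phi. rewrite L1, L2, L3, L4.
  unfold hform, bk, AL, BE, GA. cbn [inv_sq_pred].
  rewrite E2, E1.
  set (K := INR (S (S m))) in *.
  destruct (tail_scalars K HK) as (H0 & H1 & H2 & H3 & H4 & H5 & H6 & H7 & H8).
  pose proof (tail_poly (1 / K ^ 2 - 1 / (K - 1) ^ 2) (1 / (K * (K + 1))) (1 / K ^ 2)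
    ((1 + 2 * K - K ^ 2) / (2 * K ^ 2 * (K + 1)))
    ((K ^ 2 - K - 1) / (2 * K ^ 2 * (K + 1) ^ 2))
    ((K + 2) / (2 * (K + 1) ^ 2)) (PP / (K + 1)) s a0 a1 a2 c
    H0 H1 H2 H3 H4 H5 H6 H7 H8) as HT.
  eapply Rle_trans; [exact HT|]. right.
  unfold PP. field. repeat split; lra.
Qed.

Lemma is_series_of_lim (a : nat -> R) (l : R) : is_lim_seq (sum_n a) l -> is_series a l.
Proof. intro H. exact H. Qed.
Lemma lim_of_is_series (a : nat -> R) (l : R) : is_series a l -> is_lim_seq (sum_n a) l.
Proof. intro H. exact H. Qed.

Lemma norm_R (x : R) : norm x = Rabs x.
Proof. reflexivity. Qed.

Lemma sum_n_S (a : nat -> R) n : sum_n a (S n) = sum_n a n + a (S n).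
Proof. rewrite !sum_n_Reals. reflexivity. Qed.
Lemma sum_n_0 (a : nat -> R) : sum_n a 0 = a 0%nat.
Proof. rewrite sum_n_Reals. reflexivity. Qed.

Lemma tele (g : nat -> R) (l : R) : is_lim_seq g l ->
  is_series (fun n => g n - g (S n)) (g 0%nat - l).
Proof.
  intro H. apply is_series_of_lim.
  apply is_lim_seq_ext with (fun n => g 0%nat - g (S n)).
  { induction n. rewrite sum_n_0. reflexivity. rewrite sum_n_S, <- IHn. ring. }
  apply is_lim_seq_minus'. apply is_lim_seq_const.
  apply (is_lim_seq_incr_1 g l). exact H.
Qed.

Lemma INR_ge1 (n : nat) : (1 <= n)%nat -> 1 <= INR n.
Proof. intro H. replace 1 with (INR 1) by reflexivity. apply le_INR. exact H. Qed.

Lemma lim_inv_INR (p : nat) : is_lim_seq (fun n => / INR (p + n)) 0.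
Proof.
  assert (H : is_lim_seq (fun n => INR (p + n)) p_infty).
  { apply is_lim_seq_ext with (fun n => INR (n + p)).
    intro n. f_equal. lia.
    apply (is_lim_seq_incr_n INR p p_infty). apply is_lim_seq_INR. }
  apply (is_lim_seq_inv _ _ H). discriminate.
Qed.

Lemma lim_inv_INR2 (p : nat) : is_lim_seq (fun n => / (INR (p + n) ^ 2)) 0.
Proof.
  apply is_lim_seq_ext with (fun n => / INR (p + n) * / INR (p + n)).
  { intro n. rewrite <- Rinv_mult. f_equal. ring. }
  replace 0 with (0 * 0) by ring.
  apply is_lim_seq_mult'; apply lim_inv_INR.
Qed.

Lemma tele_U (m : nat) : (1 <= m)%nat ->
  is_series (fun i => / (INR (m + i) * (INR (m + i) + 1))) (/ INR m).
Proof.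
  intro Hm.
  pose proof (tele _ _ (lim_inv_INR m)) as H.
  cbv beta in H. rewrite Nat.add_0_r, Rminus_0_r in H.
  eapply is_series_ext; [|exact H].
  intro n. simpl. rewrite Nat.add_succ_r, S_INR.
  assert (1 <= INR (m + n)) by (apply INR_ge1; lia).
  field. lra.
Qed.

Lemma bk_ge2 (j : nat) : (2 <= j)%nat -> bk j = / (INR j ^ 2) - / (INR (j - 1) ^ 2).
Proof.
  intro Hj. destruct j as [|[|m]]; try lia. unfold bk. cbn [inv_sq_pred].
  replace (S (S m) - 1)%nat with (S m) by lia. unfold Rdiv. ring.
Qed.

Lemma abs_bk_ge2 (j : nat) : (2 <= j)%nat -> Rabs (bk j) = / (INR (j - 1) ^ 2) - / (INR j ^ 2).
Proof.
  intro Hj. rewrite bk_ge2 by lia.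
  assert (E : INR j = INR (j - 1) + 1) by (rewrite <- S_INR; f_equal; lia).
  assert (1 <= INR (j-1)) by (apply INR_ge1; lia).
  rewrite E. rewrite Rabs_left1. ring.
  assert (/ (INR (j - 1) + 1) ^ 2 <= / INR (j - 1) ^ 2); [|lra].
  apply Rinv_le_contravar. apply pow_lt; lra. apply pow_incr; lra.
Qed.

Lemma tele_R (m : nat) : (2 <= m)%nat ->
  is_series (fun i => Rabs (bk (m + i))) (/ (INR (m - 1) ^ 2)).
Proof.
  intro Hm.
  pose proof (tele _ _ (lim_inv_INR2 (m - 1))) as H.
  cbv beta in H. rewrite Nat.add_0_r, Rminus_0_r in H.
  eapply is_series_ext; [|exact H].
  intro n. rewrite abs_bk_ge2 by lia.
  replace (m + n - 1)%nat with (m - 1 + n)%nat by lia.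
  replace (m - 1 + S n)%nat with (m + n)%nat by lia. reflexivity.
Qed.

Lemma sum_n_nonneg (f : nat -> R) n : (forall k, 0 <= f k) -> 0 <= sum_n f n.
Proof. intro H. induction n. rewrite sum_n_0; auto. rewrite sum_n_S. specialize (H (S n)). lra. Qed.

Lemma term_le_sum (f : nat -> R) n0 n : (forall k, 0 <= f k) -> (n0 <= n)%nat -> f n0 <= sum_n f n.
Proof.
  intros H Hn. induction Hn.
  - destruct n0. rewrite sum_n_0; lra. rewrite sum_n_S. pose proof (sum_n_nonneg f n0 H). lra.
  - rewrite sum_n_S. specialize (H (S m)). lra.
Qed.

Lemma term_le_series (f : nat -> R) n0 : (forall k, 0 <= f k) -> ex_series f -> f n0 <= Series f.
Proof.
  intros H E. pose proof (lim_of_is_series _ _ (Series_correct _ E)) as L.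
  assert (Hle : Rbar_le (f n0) (Series f)).
  { apply (is_lim_seq_le_loc (fun _ => f n0) (sum_n f)).
    exists n0. intros n Hn. apply term_le_sum; auto.
    apply is_lim_seq_const. exact L. }
  exact Hle.
Qed.

Lemma abs_le_1sq (x : R) : Rabs x <= 1 + x ^ 2.
Proof. destruct (Rcase_abs x) as [h|h]; [rewrite Rabs_left by lra | rewrite Rabs_right by lra]; nra. Qed.

Lemma ex_series_le_R (u v : nat -> R) : (forall n, Rabs (u n) <= v n) -> ex_series v -> ex_series u.
Proof. intros H1 H2. apply (@ex_series_le R_AbsRing R_CompleteNormedModule u v); auto. Qed.

Definition Rt (a : nat -> R) (m : nat) : R := Series (fun i => a (m + i)%nat * bk (m + i)).
Definition Ut (c : nat -> R) (m : nat) : R :=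
  Series (fun i => c (m + i)%nat / (INR (m + i) * (INR (m + i) + 1))).

Lemma is_series_scal_R (M : R) (u : nat -> R) l : is_series u l -> is_series (fun n => M * u n) (M * l).
Proof. intro H. exact (is_series_scal_l M u l H). Qed.

Lemma U_facts (c : nat -> R) (M : R) (m : nat) : (1 <= m)%nat ->
  (forall j, (1 <= j)%nat -> Rabs (c j) <= M) ->
  ex_series (fun i => c (m + i)%nat / (INR (m + i) * (INR (m + i) + 1))) /\
  Rabs (Ut c m) <= M / INR m.
Proof.
  intros Hm HM.
  pose proof (is_series_scal_R M _ _ (tele_U m Hm)) as HB. cbv beta in HB.
  assert (Hb : forall i, 0 <= Rabs (c (m + i)%nat / (INR (m + i) * (INR (m + i) + 1)))
             <= M * / (INR (m + i) * (INR (m + i) + 1))).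
  { intro i. split. apply Rabs_pos.
    assert (1 <= INR (m + i)) by (apply INR_ge1; lia).
    assert (0 < INR (m + i) * (INR (m + i) + 1)) by nra.
    rewrite Rabs_div by lra. rewrite (Rabs_right (INR (m + i) * (INR (m + i) + 1))) by lra.
    unfold Rdiv. apply Rmult_le_compat_r.
    left. apply Rinv_0_lt_compat. lra. apply HM. lia. }
  assert (Eabs : ex_series (fun i => Rabs (c (m + i)%nat / (INR (m + i) * (INR (m + i) + 1))))).
  { apply (ex_series_le_R _ (fun i => M * / (INR (m + i) * (INR (m + i) + 1)))).
    intro n. rewrite Rabs_Rabsolu. apply Hb. eexists. exact HB. }
  assert (E : ex_series (fun i => c (m + i)%nat / (INR (m + i) * (INR (m + i) + 1)))).
  { apply (ex_series_le_R _ (fun i => M * / (INR (m + i) * (INR (m + i) + 1)))).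
    intro n. apply Hb. eexists. exact HB. }
  split; [exact E|].
  unfold Ut. eapply Rle_trans. apply Series_Rabs. exact Eabs.
  unfold Rdiv. rewrite <- (is_series_unique _ _ HB).
  apply Series_le. exact Hb. eexists. exact HB.
Qed.

Lemma R_facts (a : nat -> R) (M : R) (m : nat) : (2 <= m)%nat ->
  (forall j, (1 <= j)%nat -> Rabs (a j) <= M) ->
  ex_series (fun i => a (m + i)%nat * bk (m + i)) /\
  Rabs (Rt a m) <= M / (INR (m - 1) ^ 2).
Proof.
  intros Hm HM.
  pose proof (is_series_scal_R M _ _ (tele_R m Hm)) as HB. cbv beta in HB.
  assert (Hb : forall i, 0 <= Rabs (a (m + i)%nat * bk (m + i)) <= M * Rabs (bk (m + i))).
  { intro i. split. apply Rabs_pos.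
    rewrite Rabs_mult. apply Rmult_le_compat_r. apply Rabs_pos. apply HM. lia. }
  assert (Eabs : ex_series (fun i => Rabs (a (m + i)%nat * bk (m + i)))).
  { apply (ex_series_le_R _ (fun i => M * Rabs (bk (m + i)))).
    intro n. rewrite Rabs_Rabsolu. apply Hb. eexists. exact HB. }
  assert (E : ex_series (fun i => a (m + i)%nat * bk (m + i))).
  { apply (ex_series_le_R _ (fun i => M * Rabs (bk (m + i)))).
    intro n. apply Hb. eexists. exact HB. }
  split; [exact E|].
  unfold Rt. eapply Rle_trans. apply Series_Rabs. exact Eabs.
  unfold Rdiv. rewrite <- (is_series_unique _ _ HB).
  apply Series_le. exact Hb. eexists. exact HB.
Qed.

Lemma step_all (k : nat) (s a0 a1 a2 c : R) : (1 <= k)%nat -> (k = 1%nat -> s = 0) ->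
  0 <= hform k s a0 a1 a2 c + phi k s a0 a1 - phi (S k) (s + a0) a1 a2.
Proof.
  intros Hk Hs.
  destruct (Compare_dec.le_lt_dec 12 k) as [H|H]. apply step_tail; exact H.
  do 12 (destruct k as [|k]; [ first [lia | apply step_1; auto | apply step_2 | apply step_3
     | apply step_4 | apply step_5 | apply step_6 | apply step_7 | apply step_8 | apply step_9
     | apply step_10 | apply step_11] |]).
  lia.
Qed.

Lemma bound_M (a c : nat -> R) : ex_series (fun n => a (S n) ^ 2 + c (S n) ^ 2) ->
  exists M, 0 <= M /\ forall j, (1 <= j)%nat -> Rabs (a j) <= M /\ Rabs (c j) <= M.
Proof.
  intro E. set (f := fun n => a (S n) ^ 2 + c (S n) ^ 2).
  assert (Hf : forall n, 0 <= f n) by (intro n; unfold f; nra).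
  exists (1 + Series f). split.
  { pose proof (term_le_series f 0 Hf E). specialize (Hf 0%nat). lra. }
  intros j Hj. destruct j as [|n]; [lia|].
  pose proof (term_le_series f n Hf E) as H. unfold f in H at 1. cbv beta in H.
  pose proof (abs_le_1sq (a (S n))). pose proof (abs_le_1sq (c (S n))).
  assert (0 <= a (S n) ^ 2) by nra. assert (0 <= c (S n) ^ 2) by nra.
  split; lra.
Qed.

Fixpoint Ssum (a : nat -> R) (n : nat) : R :=
  match n with O => 0 | S m => Ssum a m + a (S m) end.
Fixpoint Fsum (a c : nat -> R) (n : nat) : R :=
  match n with O => 0 | S m => Fsum a c m + F_term a c (S m) end.
Fixpoint Hsum (a c : nat -> R) (n : nat) : R :=
  match n with O => 0 | S m => Hsum a c m +
    hform (S m) (Ssum a m) (a (S m)) (a (S (S m))) (a (S (S (S m)))) (c (S m)) end.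

Lemma Hsum_ge (a c : nat -> R) (N : nat) :
  phi (S N) (Ssum a N) (a (S N)) (a (S (S N))) <= Hsum a c N.
Proof.
  induction N.
  - simpl. cbv [phi Nat.leb]. lra.
  - simpl Hsum. simpl Ssum.
    pose proof (step_all (S N) (Ssum a N) (a (S N)) (a (S (S N))) (a (S (S (S N)))) (c (S N))
      ltac:(lia) ltac:(intro h; assert (N = 0%nat) by lia; subst; reflexivity)).
    lra.
Qed.

Lemma R_rec (a : nat -> R) (M : R) (m : nat) : (1 <= m)%nat ->
  (forall j, (1 <= j)%nat -> Rabs (a j) <= M) ->
  Rt a m = a m * bk m + Rt a (S m).
Proof.
  intros Hm HM.
  assert (E : ex_series (fun i => a (m + i)%nat * bk (m + i))).
  { destruct (Compare_dec.le_lt_dec 2 m) as [h|h]. apply (R_facts a M m h HM).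
    assert (m = 1%nat) by lia. subst m.
    apply ex_series_incr_1. destruct (R_facts a M 2 (le_n 2) HM) as [E2 _].
    exact E2. }
  unfold Rt. rewrite (Series_incr_1 _ E). rewrite Nat.add_0_r. f_equal.
  apply Series_ext. intro n. rewrite Nat.add_succ_r. reflexivity.
Qed.

Lemma U_rec (c : nat -> R) (M : R) (m : nat) : (1 <= m)%nat ->
  (forall j, (1 <= j)%nat -> Rabs (c j) <= M) ->
  Ut c m = c m / (INR m * (INR m + 1)) + Ut c (S m).
Proof.
  intros Hm HM.
  destruct (U_facts c M m Hm HM) as [E _].
  unfold Ut. rewrite (Series_incr_1 _ E). rewrite Nat.add_0_r. f_equal.
  apply Series_ext. intro n. rewrite Nat.add_succ_r. reflexivity.
Qed.

Lemma Fterm_split (a c : nat -> R) (k : nat) : (1 <= k)%nat ->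
  F_term a c k = a k ^ 2 * (84/100 + bk k) + c k ^ 2 * (84/100 + 1/(INR k * (INR k + 1)))
    + 2 * a k * a (S k) / (INR k + 1) ^ 2 + 2 * a k * Rt a (S (S k))
    + 2 * a k * c k * AL k + 2 * a (S k) * c k * BE k - 2 * a (S (S k)) * c k * GA k
    + 2 * a k * Ut c (S k).
Proof.
  intro Hk.
  assert (S1 : Series (fun i => a (k + 2 + i)%nat * (1 / (INR (k + 2 + i)) ^ 2 - 1 / (INR (k + 2 + i) - 1) ^ 2))
               = Rt a (S (S k))).
  { unfold Rt. apply Series_ext. intro i.
    replace (k + 2 + i)%nat with (S (S k) + i)%nat by lia. f_equal.
    rewrite bk_ge2 by lia. rewrite minus_INR by lia. simpl (INR 1). unfold Rdiv. ring. }
  assert (S2 : Series (fun i => 2 * a k * c (k + 1 + i)%nat / (INR (k + 1 + i) * (INR (k + 1 + i) + 1)))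
               = 2 * a k * Ut c (S k)).
  { unfold Ut. rewrite <- Series_scal_l. apply Series_ext. intro i.
    replace (k + 1 + i)%nat with (S k + i)%nat by lia. unfold Rdiv. ring. }
  unfold F_term. cbv zeta. rewrite S1, S2. unfold bk, AL, BE, GA. ring.
Qed.

Lemma bk_S (k : nat) : (1 <= k)%nat -> bk (S k) = 1 / (INR k + 1) ^ 2 - 1 / (INR k) ^ 2.
Proof. intro Hk. destruct k as [|k]; [lia|]. unfold bk. cbn [inv_sq_pred]. rewrite (S_INR (S k)). reflexivity. Qed.

Lemma Fterm_h (a c : nat -> R) (M : R) (k : nat) (s : R) : (1 <= k)%nat ->
  (forall j, (1 <= j)%nat -> Rabs (a j) <= M) ->
  F_term a c k = hform k s (a k) (a (S k)) (a (S (S k))) (c k) + 2 * a k * Rt a (S k)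
    - 2 * bk k * a k * s + 2 * a k * Ut c (S k) - 2 * c k * s / (INR k * (INR k + 1)).
Proof.
  intros Hk HM.
  rewrite (Fterm_split a c k Hk).
  rewrite (R_rec a M (S k) ltac:(lia) HM).
  rewrite (bk_S k Hk).
  assert (1 <= INR k) by (apply INR_ge1; exact Hk).
  unfold hform. field. lra.
Qed.

Lemma Fsum_eq (a c : nat -> R) (M : R) (N : nat) :
  (forall j, (1 <= j)%nat -> Rabs (a j) <= M /\ Rabs (c j) <= M) ->
  Fsum a c N = Hsum a c N + 2 * Ssum a N * (Rt a (S N) + Ut c (S N)).
Proof.
  intro HM.
  assert (HA : forall j, (1 <= j)%nat -> Rabs (a j) <= M) by (intros; apply HM; auto).
  assert (HC : forall j, (1 <= j)%nat -> Rabs (c j) <= M) by (intros; apply HM; auto).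
  induction N.
  - simpl. ring.
  - simpl Fsum. simpl Hsum. simpl Ssum. rewrite IHN.
    rewrite (Fterm_h a c M (S N) (Ssum a N) ltac:(lia) HA).
    rewrite (R_rec a M (S N) ltac:(lia) HA).
    rewrite (U_rec c M (S N) ltac:(lia) HC).
    unfold Rdiv. ring.
Qed.

Lemma ex_series_plus_R (u v : nat -> R) : ex_series u -> ex_series v -> ex_series (fun n => u n + v n).
Proof. intros H1 H2. exact (ex_series_plus u v H1 H2). Qed.
Lemma ex_series_scal_R (c : R) (u : nat -> R) : ex_series u -> ex_series (fun n => c * u n).
Proof. intros H1. exact (ex_series_scal_l c u H1). Qed.
Lemma ex_shift (u : nat -> R) : ex_series u -> ex_series (fun n => u (S n)).
Proof. intro H. exact (proj1 (ex_series_incr_1 u) H). Qed.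

Lemma sum_n_Fsum (a c : nat -> R) (N : nat) :
  sum_n (fun n => F_term a c (S n)) N = Fsum a c (S N).
Proof.
  induction N. rewrite sum_n_0. simpl. ring.
  rewrite sum_n_S, IHN. reflexivity.
Qed.

Lemma lower_bound (a c : nat -> R) (M : R) (N : nat) : (11 <= N)%nat ->
  (forall j, (1 <= j)%nat -> Rabs (a j) <= M /\ Rabs (c j) <= M) ->
  XX * a (S N) ^ 2 + YY * a (S (S N)) ^ 2
    - INR (S N) / PP * (Rt a (S N) + Ut c (S N)) ^ 2 <= Fsum a c N.
Proof.
  intros HN HM.
  rewrite (Fsum_eq a c M N HM).
  pose proof (Hsum_ge a c N) as H.
  unfold phi in H.
  assert (L1 : (S N <=? 1)%nat = false) by (apply Nat.leb_gt; lia).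
  assert (L2 : (S N <=? 11)%nat = false) by (apply Nat.leb_gt; lia).
  rewrite L1, L2 in H.
  set (x := INR (S N)) in *. set (s := Ssum a N) in *.
  set (T := Rt a (S N) + Ut c (S N)).
  assert (Hx : 1 <= x) by (apply INR_ge1; lia).
  assert (Hq : 0 < PP / x) by (unfold PP; apply Rdiv_lt_0_compat; lra).
  assert (K : 0 <= PP / x * s ^ 2 + 2 * s * T + x / PP * T ^ 2).
  { assert (E : PP / x * s ^ 2 + 2 * s * T + x / PP * T ^ 2 = (PP / x) * (s + x / PP * T) ^ 2).
    { unfold PP. field. lra. }
    rewrite E. apply Rmult_le_pos. lra. apply pow2_ge_0. }
  lra.
Qed.

Lemma T_bound (a c : nat -> R) (M : R) (n : nat) : 0 <= M ->
  (forall j, (1 <= j)%nat -> Rabs (a j) <= M /\ Rabs (c j) <= M) ->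
  0 <= INR (S (S n)) / PP * (Rt a (S (S n)) + Ut c (S (S n))) ^ 2 <= 160 * M ^ 2 * / INR (S n).
Proof.
  intros HM0 HM.
  assert (HA : forall j, (1 <= j)%nat -> Rabs (a j) <= M) by (intros; apply HM; auto).
  assert (HC : forall j, (1 <= j)%nat -> Rabs (c j) <= M) by (intros; apply HM; auto).
  destruct (R_facts a M (S (S n)) ltac:(lia) HA) as [_ HR].
  destruct (U_facts c M (S (S n)) ltac:(lia) HC) as [_ HU].
  replace (S (S n) - 1)%nat with (S n) in HR by lia.
  rewrite (S_INR (S n)) in HU |- *.
  set (x := INR (S n)) in *.
  assert (Hx : 1 <= x) by (apply INR_ge1; lia).
  set (y := / x).
  assert (Hy : 0 < y <= 1).
  { unfold y. split. apply Rinv_0_lt_compat; lra.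
    rewrite <- Rinv_1. apply Rinv_le_contravar; lra. }
  assert (Exy : x * y = 1) by (unfold y; field; lra).
  assert (HR' : Rabs (Rt a (S (S n))) <= M * y).
  { eapply Rle_trans; [exact HR|]. unfold y, Rdiv.
    apply Rmult_le_compat_l; [lra|].
    apply Rinv_le_contravar. lra. nra. }
  assert (HU' : Rabs (Ut c (S (S n))) <= M * y).
  { eapply Rle_trans; [exact HU|]. unfold y, Rdiv.
    apply Rmult_le_compat_l; [lra|]. apply Rinv_le_contravar; lra. }
  set (T := Rt a (S (S n)) + Ut c (S (S n))).
  assert (HT : Rabs T <= 2 * M * y).
  { unfold T. eapply Rle_trans. apply Rabs_triang. lra. }
  assert (HT2 : T ^ 2 <= 4 * M ^ 2 * y ^ 2).
  { assert (0 <= M * y) by nra.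
    destruct (Rcase_abs T) as [h|h]; [rewrite Rabs_left in HT by lra | rewrite Rabs_right in HT by lra]; nra. }
  assert (Ex : INR (S n) + 1 = x + 1) by reflexivity.
  split.
  { apply Rmult_le_pos. unfold PP, Rdiv. apply Rmult_le_pos. lra. left. apply Rinv_0_lt_compat; lra.
    apply pow2_ge_0. }
  fold x.
  replace ((x + 1) / PP * T ^ 2) with (20 * (x + 1) * T ^ 2) by (unfold PP; field).
  replace (/ x) with y by reflexivity.
  assert (0 <= T ^ 2) by apply pow2_ge_0.
  assert (20 * (x + 1) * T ^ 2 <= 20 * (x + 1) * (4 * M ^ 2 * y ^ 2)) by (apply Rmult_le_compat_l; lra).
  assert (E2 : 20 * (x + 1) * (4 * M ^ 2 * y ^ 2) = 80 * M ^ 2 * y * (x * y) + 80 * M ^ 2 * y ^ 2) by ring.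
  rewrite Exy in E2.
  assert (0 <= M ^ 2) by apply pow2_ge_0.
  assert (M ^ 2 * y ^ 2 <= M ^ 2 * y) by (apply Rmult_le_compat_l; nra).
  lra.
Qed.

Lemma absdiv1 (N D : R) : 0 < D -> -D <= N <= D -> -1 <= N / D <= 1.
Proof.
  intros HD [H1 H2]. split.
  - apply Rmult_le_reg_r with D; [lra|]. unfold Rdiv. rewrite Rmult_assoc, Rinv_l by lra. lra.
  - apply Rmult_le_reg_r with D; [lra|]. unfold Rdiv. rewrite Rmult_assoc, Rinv_l by lra. lra.
Qed.

Lemma coef_bounds (k : nat) : (1 <= k)%nat ->
  -1 <= bk k <= 1 /\ 0 <= / INR k ^ 2 <= 1 /\ 0 <= 1 / (INR k * (INR k + 1)) <= 1 /\
  -1 <= AL k <= 1 /\ -1 <= BE k <= 1 /\ -1 <= GA k <= 1.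
Proof.
  intro Hk. assert (HK : 1 <= INR k) by (apply INR_ge1; exact Hk).
  set (K := INR k) in *.
  assert (I1 : 0 < / K ^ 2 <= 1).
  { split. apply Rinv_0_lt_compat. nra. rewrite <- Rinv_1. apply Rinv_le_contravar; nra. }
  split.
  { destruct (Compare_dec.le_lt_dec 2 k) as [h|h].
    - rewrite bk_ge2 by exact h. fold K.
      assert (HK1 : 1 <= INR (k - 1)) by (apply INR_ge1; lia).
      assert (0 < / INR (k - 1) ^ 2 <= 1).
      { split. apply Rinv_0_lt_compat. nra. rewrite <- Rinv_1. apply Rinv_le_contravar; nra. }
      lra.
    - assert (k = 1%nat) by lia. subst k. unfold bk. cbn [inv_sq_pred]. simpl INR. lra. }
  split; [lra|].
  split.
  { split. unfold Rdiv. rewrite Rmult_1_l. left. apply Rinv_0_lt_compat. nra.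
    pose proof (absdiv1 1 (K * (K + 1)) ltac:(nra) ltac:(split; nra)). lra. }
  split. { unfold AL. fold K. apply absdiv1. nra. split; nra. }
  split. { unfold BE. fold K.
    assert (HA : 1 <= K ^ 2) by nra. assert (HB : 4 <= (K + 1) ^ 2) by nra.
    assert (HC : 4 * K ^ 2 <= K ^ 2 * (K + 1) ^ 2) by nra. assert (HD : K <= K ^ 2) by nra.
    apply absdiv1. lra. split; lra. }
  unfold GA. fold K. apply absdiv1. nra. split; nra.
Qed.

Lemma cross (x y z : R) : -1 <= z <= 1 -> - (x ^ 2 + y ^ 2) <= 2 * x * y * z <= x ^ 2 + y ^ 2.
Proof.
  intros Hz. pose proof (pow2_ge_0 (x - y)). pose proof (pow2_ge_0 (x + y)).
  destruct (Rle_dec 0 (x * y)) as [h|h].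
  - assert (x * y * z <= x * y) by nra. assert (- (x * y) <= x * y * z) by nra. split; nra.
  - assert (x * y * z <= - (x * y)) by nra. assert (x * y <= x * y * z) by nra. split; nra.
Qed.

Lemma hform0_bound (k : nat) (a0 a1 a2 c : R) : (1 <= k)%nat ->
  Rabs (hform k 0 a0 a1 a2 c) <= 5 * (a0 ^ 2 + a1 ^ 2 + a2 ^ 2 + c ^ 2).
Proof.
  intro Hk. destruct (coef_bounds k Hk) as (B1 & B2 & B3 & B4 & B5 & B6).
  unfold hform.
  set (K := INR k) in *.
  pose proof (cross a0 a1 (/ K ^ 2) ltac:(lra)).
  pose proof (cross a0 c (AL k) B4).
  pose proof (cross a1 c (BE k) B5).
  pose proof (cross a2 c (GA k) B6).
  assert (0 <= a0 ^ 2) by apply pow2_ge_0. assert (0 <= c ^ 2) by apply pow2_ge_0.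
  assert (0 <= a1 ^ 2) by apply pow2_ge_0. assert (0 <= a2 ^ 2) by apply pow2_ge_0.
  assert (-(a0^2) <= a0 ^ 2 * bk k <= a0 ^ 2) by (split; nra).
  set (w := 1 / (K * (K + 1))) in *.
  assert (0 <= c ^ 2 * w <= c ^ 2) by (split; nra).
  unfold Rdiv at 1.
  apply Rabs_le. split; nra.
Qed.

Lemma Fterm_abs (a c : nat -> R) (M : R) (k : nat) : (1 <= k)%nat -> 0 <= M ->
  (forall j, (1 <= j)%nat -> Rabs (a j) <= M /\ Rabs (c j) <= M) ->
  Rabs (F_term a c k) <= 5 * (a k ^ 2 + a (S k) ^ 2 + a (S (S k)) ^ 2 + c k ^ 2)
     + 2 * M * a k ^ 2 + 4 * M * / (INR k * (INR k + 1)).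
Proof.
  intros Hk HM0 HM.
  assert (HA : forall j, (1 <= j)%nat -> Rabs (a j) <= M) by (intros; apply HM; auto).
  assert (HC : forall j, (1 <= j)%nat -> Rabs (c j) <= M) by (intros; apply HM; auto).
  rewrite (Fterm_h a c M k 0 Hk HA).
  destruct (R_facts a M (S k) ltac:(lia) HA) as [_ HR].
  destruct (U_facts c M (S k) ltac:(lia) HC) as [_ HU].
  replace (S k - 1)%nat with k in HR by lia.
  rewrite S_INR in HU.
  pose proof (hform0_bound k (a k) (a (S k)) (a (S (S k))) (c k) Hk) as Hh.
  assert (Hx : 1 <= INR k) by (apply INR_ge1; exact Hk).
  set (x := INR k) in *.
  set (y := / x).
  assert (Hy : 0 < y <= 1).
  { unfold y. split. apply Rinv_0_lt_compat; lra.
    rewrite <- Rinv_1. apply Rinv_le_contravar; lra. }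
  assert (Exy : x * y = 1) by (unfold y; field; lra).
  assert (HR' : Rabs (Rt a (S k)) <= M * y).
  { eapply Rle_trans; [exact HR|]. unfold y, Rdiv.
    apply Rmult_le_compat_l; [lra|]. apply Rinv_le_contravar. lra. nra. }
  assert (HU' : Rabs (Ut c (S k)) <= M * y).
  { eapply Rle_trans; [exact HU|]. unfold y, Rdiv.
    apply Rmult_le_compat_l; [lra|]. apply Rinv_le_contravar; lra. }
  assert (Hw : y ^ 2 <= 2 * / (x * (x + 1))).
  { assert (E : / (x * (x + 1)) = y * / (x + 1)) by (unfold y; field; lra).
    rewrite E. assert (/ (x + 1) >= y / 2).
    { unfold y. apply Rle_ge. apply (Rmult_le_reg_r (2 * x * (x + 1))). nra.
      field_simplify; try lra. }
    nra. }
  replace (hform k 0 (a k) (a (S k)) (a (S (S k))) (c k) + 2 * a k * Rt a (S k) - 2 * bk k * a k * 0 +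
    2 * a k * Ut c (S k) - 2 * c k * 0 / (x * (x + 1)))
    with (hform k 0 (a k) (a (S k)) (a (S (S k))) (c k) + 2 * a k * (Rt a (S k) + Ut c (S k)))
    by (unfold Rdiv; ring).
  eapply Rle_trans. apply Rabs_triang.
  rewrite Rabs_mult, Rabs_mult.
  assert (HT : Rabs (Rt a (S k) + Ut c (S k)) <= 2 * M * y).
  { eapply Rle_trans. apply Rabs_triang. lra. }
  assert (Ha : 0 <= Rabs (a k)) by apply Rabs_pos.
  assert (2 * Rabs (a k) * y <= a k ^ 2 + y ^ 2).
  { rewrite <- (pow2_abs (a k)). pose proof (pow2_ge_0 (Rabs (a k) - y)). nra. }
  rewrite (Rabs_right 2) by lra.
  assert (Rabs (a k) * Rabs (Rt a (S k) + Ut c (S k)) <= Rabs (a k) * (2 * M * y))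
    by (apply Rmult_le_compat_l; lra).
  nra.
Qed.

Theorem mainTheorem15 (a c : nat -> R)
  (Hl2 : ex_series (fun n => a (S n) ^ 2 + c (S n) ^ 2)) :
  ex_series (fun n => F_term a c (S n)) /\
  0 <= Series (fun n => F_term a c (S n)).
Proof.
  destruct (bound_M a c Hl2) as (M & HM0 & HM).
  set (f := fun n => a (S n) ^ 2 + c (S n) ^ 2) in *.
  assert (Hf0 : forall n, 0 <= f n) by (intro n; unfold f; nra).
  assert (Ea : forall n, a (S n) ^ 2 <= f n) by (intro n; unfold f; nra).
  assert (Ec : forall n, c (S n) ^ 2 <= f n) by (intro n; unfold f; nra).
  assert (Ex : ex_series (fun n => F_term a c (S n))).
  { set (w := fun n => (5 + 2 * M) * f n + (5 * f (S n) + (5 * f (S (S n)) +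
        4 * M * / (INR (1 + n) * (INR (1 + n) + 1))))).
    apply (ex_series_le_R _ w).
    - intro n. eapply Rle_trans. apply (Fterm_abs a c M (S n) ltac:(lia) HM0 HM).
      unfold w. simpl (1 + n)%nat.
      pose proof (Ea n). pose proof (Ea (S n)). pose proof (Ea (S (S n))). pose proof (Ec n).
      pose proof (Hf0 n). pose proof (Hf0 (S n)). pose proof (Hf0 (S (S n))).
      assert (M * a (S n) ^ 2 <= M * f n) by (apply Rmult_le_compat_l; lra).
      assert (Efn : f n = a (S n) ^ 2 + c (S n) ^ 2) by reflexivity.
      lra.
    - unfold w.
      apply ex_series_plus_R. apply ex_series_scal_R. exact Hl2.
      apply ex_series_plus_R. apply ex_series_scal_R. apply (ex_shift f). exact Hl2.
      apply ex_series_plus_R. apply ex_series_scal_R. apply (ex_shift (fun n => f (S n))).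
      apply (ex_shift f). exact Hl2.
      apply ex_series_scal_R. eexists. apply (tele_U 1 (le_n 1)). }
  split; [exact Ex|].
  assert (Lf : is_lim_seq f 0) by (apply ex_series_lim_0; exact Hl2).
  assert (La : is_lim_seq (fun n => a (S n) ^ 2) 0).
  { apply (is_lim_seq_le_le (fun _ => 0) _ f). intro n. split. apply pow2_ge_0. apply Ea.
    apply is_lim_seq_const. exact Lf. }
  assert (La1 : is_lim_seq (fun n => a (S (S n)) ^ 2) 0)
    by exact (proj1 (is_lim_seq_incr_1 (fun n => a (S n) ^ 2) 0) La).
  assert (La2 : is_lim_seq (fun n => a (S (S (S n))) ^ 2) 0)
    by exact (proj1 (is_lim_seq_incr_1 (fun n => a (S (S n)) ^ 2) 0) La1).
  assert (LT : is_lim_seq (fun n => INR (S (S n)) / PP * (Rt a (S (S n)) + Ut c (S (S n))) ^ 2) 0).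
  { apply (is_lim_seq_le_le (fun _ => 0) _ (fun n => 160 * M ^ 2 * / INR (S n))).
    intro n. apply (T_bound a c M n HM0 HM).
    apply is_lim_seq_const.
    replace (Finite 0) with (Finite (160 * M ^ 2 * 0)) by (f_equal; ring).
    apply is_lim_seq_mult'. apply is_lim_seq_const. apply (lim_inv_INR 1). }
  set (e := fun n => XX * a (S (S n)) ^ 2 + YY * a (S (S (S n))) ^ 2
              - INR (S (S n)) / PP * (Rt a (S (S n)) + Ut c (S (S n))) ^ 2).
  assert (Le : is_lim_seq e 0).
  { unfold e. replace (Finite 0) with (Finite (XX * 0 + YY * 0 - 0)) by (f_equal; ring).
    apply is_lim_seq_minus'; [|exact LT].
    apply is_lim_seq_plus'; apply is_lim_seq_mult'; try apply is_lim_seq_const; assumption. }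
  assert (LS : is_lim_seq (sum_n (fun n => F_term a c (S n))) (Series (fun n => F_term a c (S n))))
    by exact (lim_of_is_series _ _ (Series_correct _ Ex)).
  assert (H : Rbar_le 0 (Series (fun n => F_term a c (S n)))).
  { apply (is_lim_seq_le_loc e (sum_n (fun n => F_term a c (S n)))); [| exact Le | exact LS].
    exists 10%nat. intros n Hn. rewrite sum_n_Fsum. unfold e.
    apply (lower_bound a c M (S n) ltac:(lia) HM). }
  exact H.
Qed.
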